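(* Let $A=KQ/I$ be a gentle tree algebra over an algebraically closed field $K$ whose quiver $Q$ has underlying graph $\mathbb{A}_n$ (with arbitrary orientation). If $\mathrm{rad}^2 A=0$, then the trivial extension $T(A)=A\ltimes DA$ is a Brauer line algebra.
   Context: $D=\mathrm{Hom}_K(-,K)$; $T(A)$ has underlying space $A\oplus DA$ with multiplication $(a,f)(b,g)=(ab,ag+fb)$. Gentle: every vertex of $Q$ has at most two incoming and at most two outgoing arrows; for each arrow $\alpha$ there is at most one arrow $\beta$ with $\alpha\beta\in I$, at most one $\gamma$ with $\gamma\alpha\in I$, at most one $\beta'$ with $\alpha\beta'\notin I$ and at most one $\gamma'$ with $\gamma'\alpha\notin I$ (composable arrows); $I$ is admissible and generated by paths of length 2; gentle tree means $Q$ is a tree. $\mathbb{A}_n$ is the path graph with $n$ vertices. A Brauer line algebra with $n$ edges is the Brauer graph algebra (all multiplicities $1$) of the path graph with $n$ edges; concretely it is $KQ'/I'$ with $Q'$: vertices $1,\dots,n$, arrows $\alpha_i:i\to i+1$ and $\beta_i:i+1\to i$ for $1\le i\le n-1$, and $I'=\langle \alpha_i\alpha_{i+1},\ \beta_{i+1}\beta_i,\ \beta_i\alpha_i-\alpha_{i+1}\beta_{i+1}\mid 1\le i\le n-2\rangle$. *)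

(* Defs.v *)
From HB Require Import structures.
From mathcomp Require Import all_boot all_order all_algebra all_field.
Set Implicit Arguments. Unset Strict Implicit. Unset Printing Implicit Defensive.
Import GRing.Theory.
Local Open Scope ring_scope.

(* Finite quivers.  A path is a sequence of arrows read left to right:      *)
(* the path [:: a; b] is "a followed by b" (written ab in the paper), and   *)
(* it is represented in an algebra by x a * x b.                            *)
Record quiver := Quiver {
  qvert : finType;
  qarr  : finType;
  qsrc  : qarr -> qvert;
  qtgt  : qarr -> qvert }.

Definition qrel (K : Type) (Q : quiver) := seq (K * seq (qarr Q)).

Section Presentation.
Variables (K : fieldType) (Q : quiver).

Variables (V : lmodType K) (mul : V -> V -> V) (one : V).

Definition path_val (x : qarr Q -> V) (p : seq (qarr Q)) : V :=
  match p with
  | [::] => one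
  | a :: p' => foldl (fun acc b => mul acc (x b)) (x a) p'
  end.

Definition rel_val (x : qarr Q -> V) (r : qrel K Q) : V :=
  \sum_(c <- r) c.1 *: path_val x c.2.

Definition quiver_gens (e : qvert Q -> V) (x : qarr Q -> V) : Prop :=
  [/\ (forall v w, mul (e v) (e w) = (if v == w then e v else 0)),
      \sum_v e v = one
    & (forall a, mul (mul (e (qsrc a)) (x a)) (e (qtgt a)) = x a)].

Definition alg_hom (C : algType K) (phi : V -> C) : Prop :=
  [/\ (forall (c : K) (u v : V), phi (c *: u + v) = c *: phi u + phi v),
      (forall u v, phi (mul u v) = phi u * phi v)
    & phi one = 1].

End Presentation.

(* (V, mul, one) together with the elements e, x is a presentation of the *)
(* bound quiver algebra KQ/I, I the ideal generated by rels: e, x satisfy  *)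
(* the relations, and (V, e, x) is universal among K-algebras equipped with *)
(* such elements (this universal property characterises KQ/I up to iso).    *)
Definition presents (K : fieldType) (V : lmodType K) (mul : V -> V -> V)
    (one : V) (Q : quiver) (rels : seq (qrel K Q))
    (e : qvert Q -> V) (x : qarr Q -> V) : Prop :=
  [/\ quiver_gens mul one e x,
      (forall r, r \in rels -> rel_val mul one x r = 0)
    & (forall (C : algType K) (e' : qvert Q -> C) (x' : qarr Q -> C),
        quiver_gens *%R 1 e' x' ->
        (forall r, r \in rels -> rel_val *%R 1 x' r = 0) ->
        exists phi : V -> C,
          [/\ alg_hom mul one phi, (forall v, phi (e v) = e' v),
              (forall a, phi (x a) = x' a)
            & (forall psi : V -> C, alg_hom mul one psi ->
                (forall v, psi (e v) = e' v) -> (forall a, psi (x a) = x' a) ->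
                psi =1 phi)])].

(* Quivers of type A_n.  Vertices 'I_n (paper's vertex i is ordinal i-1);  *)
(* the edges of A_n are indexed by 'I_n.-1, edge i joining i and i+1.       *)
Lemma edge_hi_proof n (i : 'I_n.-1) : (i.+1 < n)%N.
Proof. by rewrite -ltn_predRL. Qed.

Definition edge_lo n (i : 'I_n.-1) : 'I_n := widen_ord (leq_pred n) i.
Definition edge_hi n (i : 'I_n.-1) : 'I_n := Ordinal (edge_hi_proof i).

Definition An_quiver (n : nat) (o : 'I_n.-1 -> bool) : quiver :=
  @Quiver 'I_n 'I_n.-1
    (fun i => if o i then edge_lo i else edge_hi i)
    (fun i => if o i then edge_hi i else edge_lo i).

(* Membership of a path in I is read off in A = KQ/I: a path lies in I iff  *)
(* its image in A is zero.                                                  *)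
Definition zero_rels (K : fieldType) (Q : quiver)
    (Z : seq (qarr Q * qarr Q)) : seq (qrel K Q) :=
  [seq [:: (1 : K, [:: z.1; z.2])] | z <- Z].

Definition is_qpath (Q : quiver) (p : seq (qarr Q)) : bool :=
  match p with
  | [::] => true
  | a :: p' => path (fun b c => qtgt b == qsrc c) a p'
  end.

Definition gentle (K : fieldType) (Q : quiver) (A : falgType K)
    (x : qarr Q -> A) : Prop :=
  [/\ (forall v : qvert Q, leq #|[set a | qtgt a == v]| 2),
      (forall v : qvert Q, leq #|[set a | qsrc a == v]| 2),
      (forall a : qarr Q,
         leq #|[set b | (qtgt a == qsrc b) && (x a * x b == 0)]| 1 /\
         leq #|[set c | (qtgt c == qsrc a) && (x c * x a == 0)]| 1)
    & (forall a : qarr Q,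
         leq #|[set b | (qtgt a == qsrc b) && (x a * x b != 0)]| 1 /\
         leq #|[set c | (qtgt c == qsrc a) && (x c * x a != 0)]| 1)].

(* I is admissible: it contains all paths of some length m (and I is       *)
(* contained in the square of the arrow ideal since it is generated by      *)
(* paths of length 2).                                                      *)
Definition admissible (K : fieldType) (Q : quiver) (A : falgType K)
    (x : qarr Q -> A) : Prop :=
  exists m : nat, (2 <= m)%N /\
    forall p : seq (qarr Q), size p = m -> is_qpath p -> path_val *%R 1 x p = 0.

Definition in_jacobson (R : unitRingType) (a : R) : Prop :=
  forall b : R, (1 - b * a) \is a GRing.unit.

(* rad^2 R = 0, rad^2 R being spanned by products of two radical elements. *)
Definition rad_sq_zero (R : unitRingType) : Prop :=
  forall a b : R, in_jacobson a -> in_jacobson b -> a * b = 0.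

(* Trivial extension T(A) = A (+) DA, DA = Hom_K(A, K), with                *)
(* (a, f)(b, g) = (ab, a g + f b), where (a g)(y) = g(y a), (f b)(y) = f(b y).*)
Section TrivExt.
Variables (K : fieldType) (A : falgType K).

Definition Dual := 'Hom(A, K^o).
Definition TExt : lmodType K := (A * Dual)%type.

Definition texmul (u v : TExt) : TExt :=
  (u.1 * v.1,
   linfun (fun y : A => (v.2 (y * u.1) : K) + (u.2 (v.1 * y) : K) : K^o)).

Definition texone : TExt := (1, 0).
End TrivExt.

(* Brauer line algebras (Brauer graph algebra, all multiplicities 1, of the *)
(* path graph with n edges).                                                *)
(*  n >= 2: quiver with vertices 'I_n, arrows alpha_i : i -> i+1 (inl i) and *)
(*   beta_i : i+1 -> i (inr i), i : 'I_n.-1, and relations                  *)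
(*   alpha_i alpha_(i+1), beta_(i+1) beta_i, beta_i alpha_i - alpha_(i+1) beta_(i+1)*)
(*   together with alpha_i beta_i alpha_i, beta_i alpha_i beta_i (for all i;  *)
(*   these follow from the others when n >= 3 and are the Brauer relations  *)
(*   needed at the truncated leaves when n = 2).                            *)
Definition brauer_quiver (n : nat) : quiver :=
  @Quiver 'I_n ('I_n.-1 + 'I_n.-1)%type
    (fun a => match a with inl i => edge_lo i | inr i => edge_hi i end)
    (fun a => match a with inl i => edge_hi i | inr i => edge_lo i end).

Definition brauer_rels (K : fieldType) (n : nat) : seq (qrel K (brauer_quiver n)) :=
  let al (i : 'I_n.-1) : qarr (brauer_quiver n) := inl i in
  let be (i : 'I_n.-1) : qarr (brauer_quiver n) := inr i in
  flatten [seq [:: [:: (1, [:: al i; al j])];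
                   [:: (1, [:: be j; be i])];
                   [:: (1, [:: be i; al i]); (-1, [:: al j; be j])]]
          | i <- enum 'I_n.-1,
            j <- [seq j <- enum 'I_n.-1 | val j == i.+1]]
  ++ flatten [seq [:: [:: (1, [:: al i; be i; al i])];
                      [:: (1, [:: be i; al i; be i])]] | i <- enum 'I_n.-1].

Definition loop_quiver : quiver :=
  @Quiver unit unit (fun _ => tt) (fun _ => tt).

Definition loop_rels (K : fieldType) : seq (qrel K loop_quiver) :=
  [:: [:: (1, [:: tt; tt])]].

Definition is_brauer_line (K : fieldType) (n : nat) (V : lmodType K)
    (mul : V -> V -> V) (one : V) : Prop :=
  if n == 1%N then
    exists e x, @presents K V mul one loop_quiver (loop_rels K) e x
  else
    exists e x, @presents K V mul one (brauer_quiver n) (brauer_rels K n) e x.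

(* Main.v *)
Require Import Defs.
From HB Require Import structures.
From mathcomp Require Import all_boot all_order all_algebra all_field.
Set Implicit Arguments. Unset Strict Implicit. Unset Printing Implicit Defensive.
Import GRing.Theory.
Local Open Scope ring_scope.

Lemma lfunE_lin (K : fieldType) (aT rT : vectType K) (f : aT -> rT) :
  linear f -> forall u, linfun f u = f u.
Proof.
move=> fl u.
pose F : {linear aT -> rT} := HB.pack f (GRing.isLinear.Build K aT rT *:%R f fl).
exact: (lfunE F u).
Qed.

Section TE.
Variables (K : fieldType) (A : falgType K).

Definition TE : Type := (A * Dual A)%type.
HB.instance Definition _ := GRing.Lmodule.on TE.

Lemma texmul2E (u v : TExt A) y :
  (texmul u v).2 y = v.2 (y * u.1) + u.2 (v.1 * y).
Proof.
rewrite /texmul /= lfunE_lin // => c a b /=.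
by rewrite !mulrDl !mulrDr -!scalerAl -!scalerAr !linearD !linearZ /=
  addrACA -!mulrDr.
Qed.

Lemma texmul1E (u v : TExt A) : (texmul u v).1 = u.1 * v.1.
Proof. by []. Qed.

Lemma texmulA : associative (@texmul K A).
Proof.
move=> u v w; apply/pair_equal_spec; split; first by rewrite /= mulrA.
by apply/lfunP=> y; rewrite !texmul2E !texmul1E !mulrA addrA.
Qed.

Lemma texmul1 : left_id (texone A) (@texmul K A).
Proof.
move=> u; case: u => a f; apply/pair_equal_spec; split; first by rewrite /= mul1r.
by apply/lfunP=> y; rewrite texmul2E /= mulr1 zero_lfunE addr0.
Qed.

Lemma texmulr1 : right_id (texone A) (@texmul K A).
Proof.
move=> u; case: u => a f; apply/pair_equal_spec; split; first by rewrite /= mulr1.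
by apply/lfunP=> y; rewrite texmul2E /= mul1r zero_lfunE add0r.
Qed.

Lemma texmulDl : left_distributive (@texmul K A) +%R.
Proof.
move=> u v w; apply/pair_equal_spec; split; first by rewrite /= mulrDl.
apply/lfunP=> y; rewrite add_lfunE !texmul2E /= add_lfunE mulrDr linearD.
by rewrite addrACA.
Qed.

Lemma texmulDr : right_distributive (@texmul K A) +%R.
Proof.
move=> u v w; apply/pair_equal_spec; split; first by rewrite /= mulrDr.
apply/lfunP=> y; rewrite add_lfunE !texmul2E /= add_lfunE mulrDl linearD.
by rewrite addrACA.
Qed.

Lemma texone_neq0 : texone A != 0 :> TE.
Proof.
apply/eqP => /(congr1 fst) /= /eqP; by rewrite oner_eq0.
Qed.

HB.instance Definition _ := GRing.Zmodule_isNzRing.Build TE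
  texmulA texmul1 texmulr1 texmulDl texmulDr texone_neq0.

Lemma texscaleAl k (u v : TE) : k *: (u * v) = (k *: u) * v.
Proof.
apply/pair_equal_spec; split; first by rewrite /= scalerAl.
apply/lfunP=> y; rewrite scale_lfunE !texmul2E /= scale_lfunE -scalerAr linearZ /=.
by rewrite scalerDr.
Qed.
HB.instance Definition _ := GRing.Lmodule_isLalgebra.Build K TE texscaleAl.

Lemma texscaleAr k (u v : TE) : k *: (u * v) = u * (k *: v).
Proof.
apply/pair_equal_spec; split; first by rewrite /= scalerAr.
apply/lfunP=> y; rewrite scale_lfunE !texmul2E /= scale_lfunE -scalerAl linearZ /=.
by rewrite scalerDr.
Qed.
HB.instance Definition _ := GRing.Lalgebra_isAlgebra.Build K TE texscaleAr.

Lemma TE_mulE (u v : TE) : u * v = texmul u v. Proof. by []. Qed.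
Lemma TE_oneE : (1 : TE) = texone A. Proof. by []. Qed.
End TE.

Section HomBasis.
Variables (K : fieldType) (V C : algType K) (B : finType).
Variables (bV : B -> V) (bC : B -> C) (cf : B -> V -> K).
Hypothesis cfD : forall k c u v, cf k (c *: u + v) = c * cf k u + cf k v.
Hypothesis cfspan : forall u, u = \sum_k cf k u *: bV k.
Hypothesis cfb : forall k l, cf k (bV l) = (l == k)%:R.
Variable prod : B -> B -> option B.
Hypothesis tabV : forall k l, bV k * bV l = oapp bV 0 (prod k l).
Hypothesis tabC : forall k l, bC k * bC l = oapp bC 0 (prod k l).
Variable P1 : pred B.
Hypothesis oneV : 1 = \sum_(k | P1 k) bV k.
Hypothesis oneC : 1 = \sum_(k | P1 k) bC k.

Definition phiB u := \sum_k cf k u *: bC k.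

Lemma cf0 k : cf k 0 = 0.
Proof.
have h := cfD k 1 0 0; rewrite scaler0 addr0 mul1r in h.
by apply/(addrI (cf k 0)); rewrite -h addr0.
Qed.

Lemma cfZ k c u : cf k (c *: u) = c * cf k u.
Proof. by have := cfD k c u 0; rewrite addr0 cf0 addr0. Qed.

Lemma cfDD k u v : cf k (u + v) = cf k u + cf k v.
Proof. by have := cfD k 1 u v; rewrite scale1r mul1r. Qed.

Lemma phiB_lin c u v : phiB (c *: u + v) = c *: phiB u + phiB v.
Proof.
rewrite /phiB scaler_sumr -big_split /=; apply: eq_bigr => k _.
by rewrite cfD scalerDl scalerA.
Qed.

Lemma phiB0 : phiB 0 = 0.
Proof. by rewrite /phiB big1 // => k _; rewrite cf0 scale0r. Qed.

Lemma phiB_add u v : phiB (u + v) = phiB u + phiB v.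
Proof. by have := phiB_lin 1 u v; rewrite scale1r scale1r. Qed.

Lemma phiB_scale c u : phiB (c *: u) = c *: phiB u.
Proof. by have := phiB_lin c u 0; rewrite !addr0 phiB0 addr0. Qed.

Lemma phiB_sum (I : Type) (r : seq I) (P : pred I) (F : I -> V) :
  phiB (\sum_(i <- r | P i) F i) = \sum_(i <- r | P i) phiB (F i).
Proof.
elim/big_rec2: _ => [|i x y _ <-]; first exact: phiB0.
by rewrite phiB_add.
Qed.

Lemma phiB_b k : phiB (bV k) = bC k.
Proof.
rewrite /phiB (bigD1 k) //= cfb eqxx scale1r big1 ?addr0 // => l /negbTE nl.
by rewrite cfb eq_sym nl scale0r.
Qed.

Lemma phiB_o o : phiB (oapp bV 0 o) = oapp bC 0 o.
Proof. by case: o => [k|] /=; rewrite ?phiB_b ?phiB0. Qed.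

Lemma phiB_mul u v : phiB (u * v) = phiB u * phiB v.
Proof.
rewrite {1}[u]cfspan {1}[v]cfspan mulr_suml.
rewrite (@phiB_sum B) [phiB u]/phiB [phiB v]/phiB mulr_suml.
apply: eq_bigr => k _; rewrite mulr_sumr (@phiB_sum B) mulr_sumr.
apply: eq_bigr => l _.
rewrite -scalerAl -scalerAr phiB_scale phiB_scale tabV phiB_o -tabC.
by rewrite -scalerAl -scalerAr.
Qed.

Lemma phiB1 : phiB 1 = 1.
Proof. by rewrite oneV phiB_sum oneC; apply: eq_bigr => k _; rewrite phiB_b. Qed.

Lemma phiB_hom : alg_hom *%R 1 phiB.
Proof. by split; [exact: phiB_lin|exact: phiB_mul|exact: phiB1]. Qed.

Lemma phiB_uniq psi : alg_hom *%R 1 psi -> (forall k, psi (bV k) = bC k) ->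
  psi =1 phiB.
Proof.
case=> psiL _ _ psib u.
have psi0 : psi 0 = 0.
  have h := psiL 1 0 0; rewrite scaler0 addr0 scale1r in h.
  by apply/(addrI (psi 0)); rewrite -h addr0.
have psiS : forall (r : seq B) (F : B -> K),
    psi (\sum_(k <- r) F k *: bV k) = \sum_(k <- r) F k *: bC k.
  move=> r F; elim: r => [|k r IH]; first by rewrite !big_nil.
  by rewrite !big_cons psiL IH psib.
by rewrite {1}[u]cfspan psiS.
Qed.
End HomBasis.

Section QG.
Variables (K : fieldType) (Q : quiver) (C : algType K).
Variables (e : qvert Q -> C) (x : qarr Q -> C).
Hypothesis hg : @quiver_gens K Q C *%R 1 e x.

Lemma qg_ee v w : e v * e w = if v == w then e v else 0.
Proof. by case: hg. Qed.

Lemma qg_ex v a : e v * x a = if v == qsrc a then x a else 0.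
Proof.
case: hg => ee _ exe; case: (eqVneq v (qsrc a)) => [->|ne].
  by rewrite -exe !mulrA ee eqxx.
by rewrite -exe !mulrA ee (negbTE ne) !mul0r.
Qed.

Lemma qg_xe a v : x a * e v = if v == qtgt a then x a else 0.
Proof.
case: hg => ee _ exe; case: (eqVneq v (qtgt a)) => [->|ne].
  by rewrite -exe -!mulrA ee eqxx.
by rewrite -exe -!mulrA ee eq_sym (negbTE ne) !mulr0.
Qed.

Lemma qg_xx a b : qtgt a != qsrc b -> x a * x b = 0.
Proof.
move=> ne.
have -> : x a = x a * e (qtgt a) by rewrite qg_xe eqxx.
by rewrite -mulrA qg_ex (negbTE ne) mulr0.
Qed.

Lemma qg_sum : \sum_v e v = 1.
Proof. by case: hg. Qed.
End QG.

Section BrauerTable.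
Variables (K : fieldType) (n' : nat).
Notation n := n'.+2.
Notation Q := (brauer_quiver n).
Notation Varr := (qarr Q).
Variables (C : algType K) (e : 'I_n -> C) (x : Varr -> C).
Hypothesis hg : @quiver_gens K Q C *%R 1 e x.
Hypothesis hr : forall r, r \in brauer_rels K n -> rel_val *%R 1 x r = 0.

Definition al (i : 'I_n'.+1) : Varr := inl i.
Definition be (i : 'I_n'.+1) : Varr := inr i.

Lemma rel1 (i j : 'I_n'.+1) : val j = i.+1 ->
  [/\ x (al i) * x (al j) = 0, x (be j) * x (be i) = 0
    & x (be i) * x (al i) = x (al j) * x (be j)].
Proof.
move=> ji.
have mem : forall r, r \in [:: [:: (1, [:: al i; al j])];
                   [:: (1, [:: be j; be i])];
                   [:: (1, [:: be i; al i]); (-1, [:: al j; be j])]] ->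
            rel_val *%R 1 x r = 0.
  move=> r rin; apply: hr; rewrite mem_cat; apply/orP; left.
  apply/flattenP; eexists; last exact: rin.
  apply/allpairsPdep; exists i, j; split => //; first by rewrite mem_enum.
  by rewrite mem_filter mem_enum ji eqxx.
have h1 := mem _ (mem_head _ _).
have h2 : rel_val *%R 1 x [:: (1, [:: be j; be i])] = 0.
  by apply: mem; rewrite !inE eqxx orbT.
have h3 : rel_val *%R 1 x [:: (1, [:: be i; al i]); (-1, [:: al j; be j])] = 0.
  by apply: mem; rewrite !inE eqxx !orbT.
move: h1 h2 h3; rewrite /rel_val !big_cons !big_nil /= !addr0 !scale1r.
move=> -> -> /eqP; rewrite scaleN1r subr_eq0 => /eqP ->; by split.
Qed.

Lemma rel2 (i : 'I_n'.+1) :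
  x (al i) * x (be i) * x (al i) = 0 /\ x (be i) * x (al i) * x (be i) = 0.
Proof.
have mem : forall r, r \in [:: [:: (1, [:: al i; be i; al i])];
                      [:: (1, [:: be i; al i; be i])]] ->
            rel_val *%R 1 x r = 0.
  move=> r rin; apply: hr; rewrite mem_cat; apply/orP; right.
  apply/flattenP; eexists; last exact: rin.
  by apply/mapP; exists i; rewrite ?mem_enum.
have h1 := mem _ (mem_head _ _).
have h2 : rel_val *%R 1 x [:: (1, [:: be i; al i; be i])] = 0.
  by apply: mem; rewrite !inE eqxx orbT.
by move: h1 h2; rewrite /rel_val !big_cons !big_nil /= !addr0 !scale1r.
Qed.


Definition pv (v : 'I_n) : Varr := if val v == 0%N then al ord0 else be (inord v.-1).
Definition qv (v : 'I_n) : Varr := if val v == 0%N then be ord0 else al (inord v.-1).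
Definition soc v := x (pv v) * x (qv v).

Lemma src_pv v : qsrc (pv v) = v.
Proof.
apply: val_inj; rewrite /pv; case: ifP => /= [/eqP -> //|nz].
rewrite inordK; last by rewrite prednK ?lt0n ?nz // -ltnS.
by rewrite prednK // lt0n nz.
Qed.

Lemma tgt_qv v : qtgt (qv v) = v.
Proof.
apply: val_inj; rewrite /qv; case: ifP => /= [/eqP -> //|nz].
rewrite inordK; last by rewrite prednK ?lt0n ?nz // -ltnS.
by rewrite prednK // lt0n nz.
Qed.

Lemma es v w : e w * soc v = if w == v then soc v else 0.
Proof.
rewrite /soc mulrA (qg_ex hg) src_pv; case: ifP => //; by rewrite mul0r.
Qed.

Lemma se v w : soc v * e w = if w == v then soc v else 0.
Proof.
rewrite /soc -mulrA (qg_xe hg) tgt_qv; case: ifP => //; by rewrite mulr0.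
Qed.

Lemma ab i : x (al i) * x (be i) = soc (@edge_lo n i).
Proof.
rewrite /soc /pv /qv /=; case: ifP => [/eqP i0|nz].
  by have -> : i = ord0 by apply: val_inj.
have ik : val i = (@inord n' i.-1).+1.
  by rewrite inordK ?prednK // ?lt0n ?nz // ltnW.
by case: (rel1 ik).
Qed.

Lemma ba i : x (be i) * x (al i) = soc (@edge_hi n i).
Proof. by rewrite /soc /pv /qv /= inord_val. Qed.

Lemma xs a v : x a * soc v = 0.
Proof.
case: (eqVneq v (qtgt a)) => [->|ne].
  case: a => i /=.
    by rewrite -ba mulrA; case: (rel2 i).
  by rewrite -ab mulrA; case: (rel2 i).
have h : soc v = e v * soc v by rewrite es eqxx.
by rewrite h mulrA (qg_xe hg) (negbTE ne) mul0r.
Qed.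

Lemma sx v a : soc v * x a = 0.
Proof.
case: (eqVneq v (qsrc a)) => [->|ne].
  case: a => i /=.
    by rewrite -ab; case: (rel2 i).
  by rewrite -ba; case: (rel2 i).
have h : soc v = soc v * e v by rewrite se eqxx.
by rewrite h -mulrA (qg_ex hg) (negbTE ne) mulr0.
Qed.

Definition Bt := (('I_n + Varr) + 'I_n)%type.
Definition bw (k : Bt) : C :=
  match k with inl (inl v) => e v | inl (inr a) => x a | inr v => soc v end.

Definition bprod (k l : Bt) : option Bt :=
  match k, l with
  | inl (inl v), inl (inl w) => if v == w then Some k else None
  | inl (inl v), inl (inr a) => if v == qsrc a then Some l else None
  | inl (inl v), inr w => if v == w then Some l else None
  | inl (inr a), inl (inl v) => if v == qtgt a then Some k else None
  | inl (inr (inl i)), inl (inr (inr j)) =>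
      if i == j then Some (inr (@edge_lo n i)) else None
  | inl (inr (inr i)), inl (inr (inl j)) =>
      if i == j then Some (inr (@edge_hi n i)) else None
  | inr v, inl (inl w) => if w == v then Some k else None
  | _, _ => None
  end.

Lemma btab k l : bw k * bw l = oapp bw 0 (bprod k l).
Proof.
case: k => [[v|[i|i]]|v]; case: l => [[w|[j|j]]|w] /=;
  rewrite ?(qg_ee hg) ?(qg_ex hg) ?(qg_xe hg) ?es ?se ?xs ?sx /=;
  try by case: ifP.
all: try done.
- case: (eqVneq (val j) i.+1) => [ji|nji]; first by case: (rel1 ji).
  apply: (qg_xx hg) => /=; apply/eqP => /(congr1 val) /= ij.
  by rewrite ij eqxx in nji.
- case: (eqVneq i j) => [<-|nij]; first exact: ab.
  apply: (qg_xx hg) => /=; apply/eqP => /(congr1 val) /= [] ij.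
  by move/eqP: nij; apply; apply: val_inj.
- case: (eqVneq i j) => [<-|nij]; first exact: ba.
  apply: (qg_xx hg) => /=; apply/eqP => /(congr1 val) /= ij.
  by move/eqP: nij; apply; apply: val_inj.
- case: (eqVneq (val i) j.+1) => [ij|nij]; first by case: (rel1 ij).
  apply: (qg_xx hg) => /=; apply/eqP => /(congr1 val) /= ij.
  by move: nij; rewrite /= ij eqxx.
- by rewrite {2}/soc mulrA sx mul0r.
Qed.

Definition isE (k : Bt) : bool := if k is inl (inl _) then true else false.

Lemma bone : 1 = \sum_(k | isE k) bw k.
Proof.
rewrite big_sumType /= [X in _ + X]big_pred0 // addr0.
rewrite big_sumType /= [X in _ + X]big_pred0 // addr0.
by rewrite (qg_sum hg).
Qed.

End BrauerTable.


Lemma nil_unit (R : unitRingType) (z : R) m : z ^+ m = 0 -> (1 - z) \is a GRing.unit.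
Proof.
move=> zm; apply/unitrP; exists (\sum_(i < m) z ^+ i).
have h : (1 - z) * \sum_(i < m) z ^+ i = 1.
  by rewrite -opprB mulNr -subrX1 zm sub0r opprK.
have c : GRing.comm (1 - z) (\sum_(i < m) z ^+ i).
  apply: commr_sum => i _; apply: commr_sym; apply: commrB; first exact: commr1.
  exact/commr_sym/commrX.
by split=> //; rewrite -c.
Qed.

Lemma span_prod_sub (K : fieldType) (A : falgType K) (s t : seq A) (W : {vspace A}) :
  (forall u v, u \in s -> v \in t -> u * v \in W) -> (<<s>> * <<t>> <= W)%VS.
Proof.
move=> h; apply/prodvP => u v Hu Hv.
rewrite (@coord_span _ _ _ (in_tuple s) u Hu) (@coord_span _ _ _ (in_tuple t) v Hv).
rewrite mulr_suml; apply: memv_suml => i _; rewrite mulr_sumr.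
apply: memv_suml => j _; rewrite -scalerAl -scalerAr; do 2 apply: memvZ.
by apply: h; apply: mem_nth.
Qed.

Section PathVal.
Variables (K : fieldType) (Q : quiver) (C : algType K) (x : qarr Q -> C).

Lemma foldl_mulA (c y : C) p :
  foldl (fun acc b => acc * x b) (c * y) p = c * foldl (fun acc b => acc * x b) y p.
Proof. by elim: p c y => [|b p IH] c y //=; rewrite -mulrA IH. Qed.

Lemma foldl_mul0 p : foldl (fun acc b => acc * x b) 0 p = 0.
Proof. by elim: p => [|b p IH] //=; rewrite mul0r. Qed.

Lemma path_val_rcons p a : path_val *%R 1 x (rcons p a) = path_val *%R 1 x p * x a.
Proof.
case: p => [|b p] /=; first by rewrite mul1r.
by rewrite foldl_rcons.
Qed.

Lemma path_val_nonq (e : qvert Q -> C) : quiver_gens *%R 1 e x ->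
  forall p, ~~ is_qpath p -> path_val *%R 1 x p = 0.
Proof.
move=> hg [|a p] //=; elim: p a => [|b p IH] a //=.
case/nandP => [nab|np].
  by rewrite (qg_xx hg nab) foldl_mul0.
by rewrite foldl_mulA; have := IH b np; rewrite /= => ->; rewrite mulr0.
Qed.
End PathVal.

Section AStruct.
Variables (K : fieldType) (Q : quiver) (Z : seq (qarr Q * qarr Q)).
Variables (A : falgType K) (e : qvert Q -> A) (x : qarr Q -> A).
Hypothesis hp : @presents K A *%R 1 Q (zero_rels K Z) e x.

Lemma hpg : quiver_gens *%R 1 e x. Proof. by case: hp. Qed.
Lemma hpr : forall r, r \in zero_rels K Z -> rel_val *%R 1 x r = 0.
Proof. by case: hp. Qed.

Definition eseq := [seq e v | v <- enum (qvert Q)].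
Definition xseq := [seq x a | a <- enum (qarr Q)].
Definition EV : {vspace A} := <<eseq>>%VS.
Definition XV : {vspace A} := <<xseq>>%VS.
Definition GV : {vspace A} := (EV + XV)%VS.

Lemma e_in v : e v \in EV.
Proof. by apply: memv_span; apply: map_f; rewrite mem_enum. Qed.
Lemma x_in a : x a \in XV.
Proof. by apply: memv_span; apply: map_f; rewrite mem_enum. Qed.

Lemma zero_rel_val (C : algType K) (x' : qarr Q -> C) r :
  r \in zero_rels K Z -> (forall a b, x' a * x' b = 0) -> rel_val *%R 1 x' r = 0.
Proof.
case/mapP => z _ -> h; rewrite /rel_val big_cons big_nil /= addr0 scale1r.
exact: h.
Qed.

Lemma zero_rel_prod a b : (a, b) \in Z -> x a * x b = 0.
Proof.
move=> ab; have := hpr (map_f (fun z : qarr Q * qarr Q =>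
    [:: (1 : K, [:: z.1; z.2])]) ab).
by rewrite /rel_val big_cons big_nil /= addr0 scale1r.
Qed.

Lemma full_agenv y : y \in agenv GV.
Proof.
pose B : {aspace A} := agenv_aspace GV.
have one_in : (1 : A) \in B by rewrite memvE sub1_agenv.
have eB v : e v \in B.
  by apply: (subvP (sub_agenv _)); apply: (subvP (addvSl _ _)); apply: e_in.
have xB a : x a \in B.
  by apply: (subvP (sub_agenv _)); apply: (subvP (addvSr _ _)); apply: x_in.
pose e' v : subvs_of B := Subvs (eB v).
pose x' a : subvs_of B := Subvs (xB a).
have valM : forall u w : subvs_of B, val (u * w) = val u * val w by [].
have val1 : val (1 : subvs_of B) = 1 by apply/eqP; rewrite /= algid_eq1.
case: hpg => ee se exe.
have hg' : quiver_gens *%R 1 e' x'.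
  split.
  - move=> v w; apply: val_inj; rewrite valM /= ee; by case: ifP.
  - apply: val_inj; rewrite val1 -se.
    by change (vsval (\sum_v e' v) = \sum_v e v); rewrite raddf_sum.
  - by move=> a; apply: val_inj; rewrite !valM /= exe.
have hr' : forall r, r \in zero_rels K Z -> rel_val *%R 1 x' r = 0.
  move=> r /[dup] rin /mapP [[a b] ab ->].
  rewrite /rel_val big_cons big_nil /= addr0 scale1r.
  by apply: val_inj; rewrite valM /= (zero_rel_prod ab).
case: hp => _ _ /(_ _ e' x' hg' hr') [phi [[phiL phiM phi1] phie phix _]].
case: hp => _ _ /(_ _ e x hpg hpr) [phiA [_ _ _ uniq]].
pose psi y := vsval (phi y).
have psiH : alg_hom *%R 1 psi.
  split.
  - by move=> c u w; rewrite /psi phiL raddfD; congr (_ + _); apply: linearZ.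
  - by move=> u w; rewrite /psi phiM.
  - by rewrite /psi phi1 val1.
have idH : alg_hom *%R 1 (@id A) by [].
have h1 := uniq _ psiH (fun v => congr1 vsval (phie v)) (fun a => congr1 vsval (phix a)).
have h2 := uniq _ idH (fun v => erefl) (fun a => erefl).
have -> : y = psi y by rewrite (h1 y) -(h2 y).
exact: subvsP.
Qed.


Lemma EE : (EV * EV <= EV)%VS.
Proof.
apply: span_prod_sub => u w /mapP [v _ ->] /mapP [v' _ ->].
rewrite (qg_ee hpg); case: ifP => _; [exact: e_in | exact: mem0v].
Qed.

Lemma EX : (EV * XV <= XV)%VS.
Proof.
apply: span_prod_sub => u w /mapP [v _ ->] /mapP [a _ ->].
rewrite (qg_ex hpg); case: ifP => _; [exact: x_in | exact: mem0v].
Qed.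

Lemma XE : (XV * EV <= XV)%VS.
Proof.
apply: span_prod_sub => u w /mapP [a _ ->] /mapP [v _ ->].
rewrite (qg_xe hpg); case: ifP => _; [exact: x_in | exact: mem0v].
Qed.

Fixpoint words k : seq (seq (qarr Q)) :=
  if k is k'.+1 then [seq rcons p a | p <- words k', a <- enum (qarr Q)]
  else [:: [::]].

Lemma words_size k p : p \in words k -> size p = k.
Proof.
elim: k p => [|k IH] p /=; first by rewrite inE => /eqP ->.
by case/allpairsP => [[q a] [/= /IH qk _ ->]]; rewrite size_rcons qk.
Qed.

Definition PV k : {vspace A} := <<[seq path_val *%R 1 x p | p <- words k]>>%VS.

Lemma XpowPV k : (XV ^+ k <= PV k)%VS.
Proof.
elim: k => [|k IH]; first by rewrite expv0 /PV /= span_seq1.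
rewrite expvSr; apply: subv_trans (prodvSl _ IH) _.
apply: span_prod_sub => u w /mapP [p pin ->] /mapP [a ain ->].
rewrite -path_val_rcons; apply: memv_span; apply: map_f.
by apply: allpairs_f.
Qed.

Variable m : nat.
Hypothesis hm2 : (2 <= m)%N.
Hypothesis hmz : forall p : seq (qarr Q), size p = m -> is_qpath p ->
  path_val *%R 1 x p = 0.

Lemma PVm0 : (PV m <= 0)%VS.
Proof.
apply/span_subvP => u /mapP [p pin ->]; rewrite memv0.
case: (boolP (is_qpath p)) => q.
  by rewrite hmz // (words_size pin).
by rewrite (path_val_nonq hpg).
Qed.

Lemma Xge k : (m <= k)%N -> (XV ^+ k <= 0)%VS.
Proof.
move=> h; rewrite -(subnKC h) expvD.
apply: subv_trans (prodvSl _ (subv_trans (XpowPV m) PVm0)) _.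
by rewrite prod0v.
Qed.

Definition FV j : {vspace A} := (\sum_(k < m) XV ^+ (j + k))%VS.

Lemma XF i j : (j <= i)%N -> (XV ^+ i <= FV j)%VS.
Proof.
move=> ji; case: (ltnP (i - j) m) => h.
  by apply: (sumv_sup (Ordinal h)) => //=; rewrite subnKC.
apply: subv_trans (Xge _) (sub0v _).
exact: leq_trans h (leq_subr _ _).
Qed.

Lemma FFsub j l : (FV j * FV l <= FV (j + l))%VS.
Proof.
rewrite /FV big_distrl /=; apply/subv_sumP => k _.
rewrite big_distrr /=; apply/subv_sumP => k' _.
by rewrite -expvD; apply: XF; rewrite addnACA leq_addr.
Qed.

Lemma EXi i : (0 < i)%N -> (EV * XV ^+ i <= XV ^+ i)%VS.
Proof. by case: i => // i _; rewrite expvSl prodvA; apply: prodvSl; exact: EX. Qed.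

Lemma XiE i : (0 < i)%N -> (XV ^+ i * EV <= XV ^+ i)%VS.
Proof. by case: i => // i _; rewrite expvSr -prodvA; apply: prodvSr; exact: XE. Qed.

Definition SV : {vspace A} := (EV + FV 1)%VS.

Lemma one_E : (1 : A) \in EV.
Proof. by rewrite -(qg_sum hpg); apply: memv_suml => v _; apply: e_in. Qed.

Lemma X_F1 : (XV <= FV 1)%VS.
Proof. by rewrite -{1}(expv1 XV); apply: XF. Qed.

Lemma GS : (GV * SV <= SV)%VS.
Proof.
rewrite /GV /SV prodvDl !prodvDr !subv_add; apply/andP; split; apply/andP; split.
- exact: subv_trans EE (addvSl _ _).
- apply: subv_trans (addvSr _ _); rewrite /FV big_distrr /=.
  apply/subv_sumP => k _; apply: subv_trans (EXi _) _ => //; exact: XF.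
- by apply: subv_trans (addvSr _ _); apply: subv_trans XE X_F1.
- apply: subv_trans (addvSr _ _); rewrite /FV big_distrr /=.
  by apply/subv_sumP => k _; rewrite -expvSl; apply: XF.
Qed.

Lemma A_in_S y : y \in SV.
Proof.
apply: (subvP (agenv_sub_modl _ GS)); last exact: full_agenv.
by rewrite -memvE; apply: (subvP (addvSl _ _)); apply: one_E.
Qed.

Lemma SX_F1 : (SV * XV <= FV 1)%VS.
Proof.
rewrite /SV prodvDl subv_add; apply/andP; split.
  exact: subv_trans EX X_F1.
rewrite /FV big_distrl /=; apply/subv_sumP => k _.
by rewrite -expvSr; apply: XF.
Qed.

Lemma FVm0 : (FV m <= 0)%VS.
Proof. by apply/subv_sumP => k _; apply: Xge; rewrite leq_addr. Qed.

Lemma x_jac a : in_jacobson (x a).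
Proof.
move=> b; apply: (@nil_unit _ _ m).
have z1 : b * x a \in FV 1 by apply: (subvP SX_F1); apply: memv_mul;
  [exact: A_in_S | exact: x_in].
have zj : forall j, (b * x a) ^+ j.+1 \in FV j.+1.
  elim=> [|j IH]; first by rewrite expr1.
  rewrite exprSr; have := subvP (FFsub j.+1 1); rewrite addn1; apply.
  exact: memv_mul.
case: m hm2 zj FVm0 => // m' _ zj F0.
by have := subvP F0 _ (zj m'); rewrite memv0 => /eqP.
Qed.


Lemma ce_ex v : exists f : A -> K,
  [/\ forall c u w, f (c *: u + w) = c * f u + f w,
      forall w, f (e w) = (w == v)%:R & forall a, f (x a) = 0].
Proof.
pose e' (w : qvert Q) : K^o := (w == v)%:R.
pose x' (a : qarr Q) : K^o := 0.
have hg' : quiver_gens *%R 1 e' x'.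
  split.
  - move=> w u; rewrite /e'; have [->|nwu] := eqVneq w u.
      by rewrite -natrM mulnb andbb.
    case: (eqVneq w v) => [ewv|]; case: (eqVneq u v) => [euv|] //=;
      rewrite ?mulr0 ?mul0r //.
    by move: nwu; rewrite ewv euv eqxx.
  - rewrite (bigD1 v) //= big1 ?addr0 /e' ?eqxx // => w /negbTE -> //.
  - by move=> a; rewrite /x' mulr0 mul0r.
have hr' : forall r, r \in zero_rels K Z -> rel_val *%R 1 x' r = 0.
  by move=> r rin; apply: zero_rel_val => // a b; rewrite /x' mulr0.
case: hp => _ _ /(_ _ e' x' hg' hr') [phi [[phiL _ _] phie phix _]].
by exists phi; split=> [c u w|w|a]; rewrite ?phiL ?phie ?phix.
Qed.

Hypothesis hnl : forall a : qarr Q, qsrc a != qtgt a.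

Lemma cx_ex a : exists f : A -> K,
  [/\ forall c u w, f (c *: u + w) = c * f u + f w,
      forall w, f (e w) = 0 & forall b, f (x b) = (b == a)%:R].
Proof.
pose i0 : 'I_2 := ord0. pose i1 : 'I_2 := ord_max.
pose d i j : 'M[K]_2 := delta_mx i j.
have dM : forall i j k l, d i j * d k l = d i l *+ (j == k).
  by move=> i j k l; rewrite -mulmxE mul_delta_mx_cond.
pose e' (w : qvert Q) : 'M[K]_2 :=
  if w == qsrc a then d i0 i0 else if w == qtgt a then d i1 i1 else 0.
pose x' (b : qarr Q) : 'M[K]_2 := if b == a then d i0 i1 else 0.
have nst := hnl a.
have nts : qtgt a != qsrc a by rewrite eq_sym.
have e's : e' (qsrc a) = d i0 i0 by rewrite /e' eqxx.
have e't : e' (qtgt a) = d i1 i1 by rewrite /e' (negbTE nts) eqxx.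
have e'o : forall w, w != qsrc a -> w != qtgt a -> e' w = 0.
  by move=> w h1 h2; rewrite /e' (negbTE h1) (negbTE h2).
have hg' : quiver_gens *%R 1 e' x'.
  split.
  - have cls : forall w, [\/ w = qsrc a, w = qtgt a | (w != qsrc a) && (w != qtgt a)].
      move=> w; case: (eqVneq w (qsrc a)) => [->|h1]; first by constructor 1.
      case: (eqVneq w (qtgt a)) => [->|h2]; first by constructor 2.
      by constructor 3; apply/andP.
    move=> w u; case: (cls w) => [->|->|/andP[h1 h2]];
      case: (cls u) => [->|->|/andP[h3 h4]];
      rewrite ?e's ?e't ?(e'o _ h1 h2) ?(e'o _ h3 h4) ?dM ?eqxx ?mulr1n ?mulr0n
        ?mulr0 ?mul0r ?(negbTE nst) ?(negbTE nts) //;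
      try by case: ifP.
    + by rewrite eq_sym (negbTE h3).
    + by rewrite eq_sym (negbTE h4).
  - rewrite (bigD1 (qsrc a)) //= (bigD1 (qtgt a)) //= big1 ?addr0.
      rewrite e's e't; apply/matrixP => i j; rewrite !mxE.
      have o2 : forall k : 'I_2, k = i0 \/ k = i1.
        by move=> [[|[|k]] hk]; [left|right|]; try apply: val_inj.
      by have [->|->] := o2 i; have [->|->] := o2 j; rewrite /= ?addr0 ?add0r.
    by move=> w /andP [h1 h2]; apply: e'o.
  - move=> b; rewrite /x'; case: (eqVneq b a) => [->|_]; last by rewrite mulr0 mul0r.
    by rewrite e's e't !dM /= !mulr1n.
have hr' : forall r, r \in zero_rels K Z -> rel_val *%R 1 x' r = 0.
  move=> r rin; apply: zero_rel_val => // b c; rewrite /x'.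
  by case: (b == a); case: (c == a); rewrite ?mulr0 ?mul0r // dM mulr0n.
case: hp => _ _ /(_ _ e' x' hg' hr') [phi [[phiL _ _] phie phix _]].
exists (fun y => phi y i0 i1); split.
- by move=> c u w; rewrite phiL !mxE.
- move=> w; rewrite phie.
  have [->|nws] := eqVneq w (qsrc a); first by rewrite e's mxE.
  have [->|nwt] := eqVneq w (qtgt a); first by rewrite e't mxE.
  by rewrite e'o // mxE.
- move=> b; rewrite phix /x'; case: (b == a); by rewrite ?mxE.
Qed.


Hypothesis hrad : rad_sq_zero A.

Lemma xx0 a b : x a * x b = 0.
Proof.
case: (eqVneq (qtgt a) (qsrc b)) => [_|ne]; last exact: (qg_xx hpg).
by apply: hrad; apply: x_jac.
Qed.

Lemma A_in_G y : y \in GV.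
Proof.
apply: (subvP _ _ (A_in_S y)); rewrite /SV /GV; apply: addvS => //.
apply/subv_sumP => k _; case: k => [[|k] hk] /=; first by rewrite addn0 expv1.
have -> : (1 + k.+1 = 2 + k)%N by rewrite addnS.
have X2 : (XV * XV <= 0)%VS.
  by apply: span_prod_sub => u w /mapP [a _ ->] /mapP [b _ ->]; rewrite xx0 mem0v.
rewrite expvD expv2; apply: subv_trans (prodvSl _ X2) _.
by rewrite prod0v sub0v.
Qed.

Lemma lin0 (f : A -> K) : (forall c u w, f (c *: u + w) = c * f u + f w) -> f 0 = 0.
Proof.
move=> fL; have h := fL 1 0 0; rewrite scaler0 addr0 mul1r in h.
by apply/(addrI (f 0)); rewrite -h addr0.
Qed.

Lemma A_span (ce : qvert Q -> A -> K) (cx : qarr Q -> A -> K) :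
  (forall v c u w, ce v (c *: u + w) = c * ce v u + ce v w) ->
  (forall v w, ce v (e w) = (w == v)%:R) -> (forall v a, ce v (x a) = 0) ->
  (forall a c u w, cx a (c *: u + w) = c * cx a u + cx a w) ->
  (forall a w, cx a (e w) = 0) -> (forall a b, cx a (x b) = (b == a)%:R) ->
  forall y, y = \sum_v ce v y *: e v + \sum_a cx a y *: x a.
Proof.
move=> ceL cee cex cxL cxe cxx.
pose proj y := \sum_v ce v y *: e v + \sum_a cx a y *: x a.
have projL : forall c u w, proj (c *: u + w) = c *: proj u + proj w.
  move=> c u w; rewrite /proj scalerDr addrACA !scaler_sumr -!big_split /=.
  congr (_ + _); apply: eq_bigr => i _; by rewrite ?ceL ?cxL scalerDl scalerA.
have proj0 : proj 0 = 0.
  rewrite /proj !big1 ?addr0 // => i _; by rewrite lin0 ?scale0r.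
have projS : forall (I : Type) (r : seq I) (F : I -> K) (G : I -> A),
    proj (\sum_(i <- r) F i *: G i) = \sum_(i <- r) F i *: proj (G i).
  move=> I r F G; elim: r => [|i r IH]; first by rewrite !big_nil.
  by rewrite !big_cons projL IH.
have projG : forall g, g \in eseq ++ xseq -> proj g = g.
  move=> g; rewrite mem_cat => /orP [] /mapP [i _ ->]; rewrite /proj.
    rewrite (bigD1 i) //= cee eqxx scale1r big1 ?addr0.
      by rewrite big1 ?addr0 // => a _; rewrite cxe scale0r.
    by move=> v /negbTE nv; rewrite cee eq_sym nv scale0r.
  rewrite big1 ?add0r; last by move=> v _; rewrite cex scale0r.
  rewrite (bigD1 i) //= cxx eqxx scale1r big1 ?addr0 //.
  by move=> a /negbTE na; rewrite cxx eq_sym na scale0r.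
move=> y; have yG : y \in <<eseq ++ xseq>>%VS by rewrite span_cat; apply: A_in_G.
rewrite -/(proj y) {1 2}(@coord_span _ _ _ (in_tuple (eseq ++ xseq)) y yG) projS.
by apply: eq_bigr => i _; rewrite projG // mem_nth.
Qed.

End AStruct.

Section TETable.
#[local] Set Default Proof Using "All".
Variables (K : fieldType) (Q : quiver) (A : falgType K).
Variables (e : qvert Q -> A) (x : qarr Q -> A).
Variables (ce : qvert Q -> A -> K) (cx : qarr Q -> A -> K).
Hypothesis hg : quiver_gens *%R 1 e x.
Hypothesis hxx : forall a b, x a * x b = 0.
Hypothesis ceL : forall v c u w, ce v (c *: u + w) = c * ce v u + ce v w.
Hypothesis cee : forall v w, ce v (e w) = (w == v)%:R.
Hypothesis cex : forall v a, ce v (x a) = 0.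
Hypothesis cxL : forall a c u w, cx a (c *: u + w) = c * cx a u + cx a w.
Hypothesis cxe : forall a w, cx a (e w) = 0.
Hypothesis cxx : forall a b, cx a (x b) = (b == a)%:R.
Hypothesis hspan : forall y, y = \sum_v ce v y *: e v + \sum_a cx a y *: x a.

Definition ed v : Dual A := linfun (fun y : A => (ce v y : K^o)).
Definition xd a : Dual A := linfun (fun y : A => (cx a y : K^o)).

Lemma edE v y : ed v y = ce v y.
Proof. by rewrite lfunE_lin // => c u w; rewrite ceL. Qed.
Lemma xdE a y : xd a y = cx a y.
Proof. by rewrite lfunE_lin // => c u w; rewrite cxL. Qed.

Lemma TE_eq (u v : TE A) : u.1 = v.1 -> (forall w, u.2 (e w) = v.2 (e w)) ->
  (forall a, u.2 (x a) = v.2 (x a)) -> u = v.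
Proof.
case: u v => [a f] [b g] /= -> he hx; congr pair; apply/lfunP => y.
rewrite (hspan y) !raddfD !raddf_sum /=; congr (_ + _); apply: eq_bigr => i _;
  by rewrite !linearZ /= ?he ?hx.
Qed.

Definition Ee v : TE A := (e v, 0).
Definition Xa a : TE A := (x a, 0).
Definition De v : TE A := (0, ed v).
Definition Dx a : TE A := (0, xd a).

Lemma mul2E (u v : TE A) y : (u * v).2 y = v.2 (y * u.1) + u.2 (v.1 * y).
Proof. exact: texmul2E. Qed.
Lemma mul1E (u v : TE A) : (u * v).1 = u.1 * v.1.
Proof. by []. Qed.

Lemma ifT2 (b : bool) (u v : TE A) y : (if b then u else v).2 y = if b then u.2 y else v.2 y.
Proof. by case: b. Qed.
Lemma ifT1 (b : bool) (u v : TE A) : (if b then u else v).1 = if b then u.1 else v.1.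
Proof. by case: b. Qed.

Lemma ce0 v : ce v 0 = 0.
Proof.
have h := ceL v 1 0 0; rewrite scaler0 addr0 mul1r in h.
by apply/(addrI (ce v 0)); rewrite -h addr0.
Qed.
Lemma cx0 a : cx a 0 = 0.
Proof.
have h := cxL a 1 0 0; rewrite scaler0 addr0 mul1r in h.
by apply/(addrI (cx a 0)); rewrite -h addr0.
Qed.

Ltac tsimp := rewrite ?mul2E ?mul1E ?ifT1 ?ifT2 /= ?zero_lfunE ?edE ?xdE
  ?(qg_ee hg) ?(qg_ex hg) ?(qg_xe hg) ?hxx ?mulr0 ?mul0r ?addr0 ?add0r.

Ltac tfin := repeat (rewrite ?cee ?cex ?cxe ?cxx ?ce0 ?cx0 ?eqxx //=;
  case: eqP => [?|?] //=; try subst).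

Lemma EeEe v w : Ee v * Ee w = if v == w then Ee v else 0.
Proof. apply: TE_eq => [|u|a]; tsimp; tfin. Qed.
Lemma EeXa v a : Ee v * Xa a = if v == qsrc a then Xa a else 0.
Proof. apply: TE_eq => [|u|b]; tsimp; tfin. Qed.
Lemma XaEe a v : Xa a * Ee v = if v == qtgt a then Xa a else 0.
Proof. apply: TE_eq => [|u|b]; tsimp; tfin. Qed.
Lemma XaXa a b : Xa a * Xa b = 0.
Proof. apply: TE_eq => [|u|c]; tsimp; tfin. Qed.
Lemma EeDe v w : Ee v * De w = if v == w then De v else 0.
Proof. apply: TE_eq => [|u|b]; tsimp; tfin. Qed.
Lemma EeDx v a : Ee v * Dx a = if v == qtgt a then Dx a else 0.
Proof. apply: TE_eq => [|u|b]; tsimp; tfin. Qed.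
Lemma XaDe a w : Xa a * De w = 0.
Proof. apply: TE_eq => [|u|b]; tsimp; tfin. Qed.
Lemma XaDx a b : Xa a * Dx b = if a == b then De (qsrc a) else 0.
Proof. apply: TE_eq => [|u|c]; tsimp; tfin. Qed.
Lemma DeEe w v : De w * Ee v = if v == w then De v else 0.
Proof. apply: TE_eq => [|u|b]; tsimp; tfin. Qed.
Lemma DxEe a v : Dx a * Ee v = if v == qsrc a then Dx a else 0.
Proof. apply: TE_eq => [|u|b]; tsimp; tfin. Qed.
Lemma DeXa w a : De w * Xa a = 0.
Proof. apply: TE_eq => [|u|b]; tsimp; tfin. Qed.
Lemma DxXa b a : Dx b * Xa a = if a == b then De (qtgt a) else 0.
Proof. apply: TE_eq => [|u|c]; tsimp; tfin. Qed.
Lemma DD (f g : Dual A) : ((0, f) : TE A) * (0, g) = 0.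
Proof.
by apply: TE_eq => [|u|b]; rewrite ?mul1E ?mul2E /= ?mulr0 ?mul0r ?linear0 ?addr0 ?zero_lfunE.
Qed.

Lemma TE_fst_sum (I : Type) (r : seq I) (F : I -> TE A) :
  (\sum_(i <- r) F i).1 = \sum_(i <- r) (F i).1.
Proof. by elim/big_rec2: _ => //= i a b _ ->. Qed.

Lemma TE_snd_sum (I : Type) (r : seq I) (F : I -> TE A) y :
  (\sum_(i <- r) F i).2 y = \sum_(i <- r) (F i).2 y.
Proof.
elim/big_rec2: _ => [|i a b _ <-] /=; first by rewrite zero_lfunE.
by rewrite add_lfunE.
Qed.

Lemma Ee_sum : \sum_v Ee v = 1.
Proof.
apply: TE_eq => [|w|a]; rewrite ?TE_fst_sum ?TE_snd_sum /=.
- exact: (qg_sum hg).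
- by rewrite zero_lfunE big1 // => v _; rewrite zero_lfunE.
- by rewrite zero_lfunE big1 // => v _; rewrite zero_lfunE.
Qed.

Lemma TE_span (u : TE A) :
  u = \sum_v ce v u.1 *: Ee v + \sum_a cx a u.1 *: Xa a
    + \sum_v u.2 (e v) *: De v + \sum_a u.2 (x a) *: Dx a.
Proof.
apply: TE_eq => [|w|b] /=.
- rewrite !TE_fst_sum /= [u.1 in LHS]hspan.
  have h1 : \sum_a u.2 (x a) *: (0 : A) = 0 by rewrite big1 // => a _; rewrite scaler0.
  have h2 : \sum_v u.2 (e v) *: (0 : A) = 0 by rewrite big1 // => a _; rewrite scaler0.
  by rewrite h1 h2 !addr0.
- rewrite !add_lfunE !TE_snd_sum /=.
  have z1 : \sum_v (ce v u.1 *: (0 : Dual A)) (e w) = 0.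
    by rewrite big1 // => i _; rewrite scale_lfunE zero_lfunE scaler0.
  have z2 : \sum_a (cx a u.1 *: (0 : Dual A)) (e w) = 0.
    by rewrite big1 // => i _; rewrite scale_lfunE zero_lfunE scaler0.
  have z3 : \sum_a (u.2 (x a) *: xd a) (e w) = 0.
    by rewrite big1 // => i _; rewrite scale_lfunE xdE cxe scaler0.
  rewrite z1 z2 z3 !add0r addr0 (bigD1 w) //= scale_lfunE edE cee eqxx.
  rewrite big1 ?addr0; first by rewrite /GRing.scale /= mulr1.
  by move=> v /negbTE nv; rewrite scale_lfunE edE cee eq_sym nv scaler0.
- rewrite !add_lfunE !TE_snd_sum /=.
  have z1 : \sum_v (ce v u.1 *: (0 : Dual A)) (x b) = 0.
    by rewrite big1 // => i _; rewrite scale_lfunE zero_lfunE scaler0.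
  have z2 : \sum_a (cx a u.1 *: (0 : Dual A)) (x b) = 0.
    by rewrite big1 // => i _; rewrite scale_lfunE zero_lfunE scaler0.
  have z3 : \sum_v (u.2 (e v) *: ed v) (x b) = 0.
    by rewrite big1 // => i _; rewrite scale_lfunE edE cex scaler0.
  rewrite z1 z2 z3 !add0r (bigD1 b) //= scale_lfunE xdE cxx eqxx.
  rewrite big1 ?addr0; first by rewrite /GRing.scale /= mulr1.
  by move=> a /negbTE na; rewrite scale_lfunE xdE cxx eq_sym na scaler0.
Qed.


Lemma DxDx a b : Dx a * Dx b = 0. Proof. exact: DD. Qed.
Lemma DeDx v b : De v * Dx b = 0. Proof. exact: DD. Qed.
Lemma DxDe a v : Dx a * De v = 0. Proof. exact: DD. Qed.
Lemma DeDe v w : De v * De w = 0. Proof. exact: DD. Qed.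
End TETable.

Section BrauerTE.
Variables (K : fieldType) (n' : nat) (o : 'I_n'.+1 -> bool) (A : falgType K).
Notation n := n'.+2.
Notation QA := (@An_quiver n o).
Variables (e : 'I_n -> A) (x : 'I_n'.+1 -> A).
Variables (ce : 'I_n -> A -> K) (cx : 'I_n'.+1 -> A -> K).
Hypothesis hg : @quiver_gens K QA A *%R 1 e x.
Hypothesis hxx : forall a b, x a * x b = 0.
Hypothesis ceL : forall v c u w, ce v (c *: u + w) = c * ce v u + ce v w.
Hypothesis cee : forall v w, ce v (e w) = (w == v)%:R.
Hypothesis cex : forall v a, ce v (x a) = 0.
Hypothesis cxL : forall a c u w, cx a (c *: u + w) = c * cx a u + cx a w.
Hypothesis cxe : forall a w, cx a (e w) = 0.
Hypothesis cxx : forall a b, cx a (x b) = (b == a)%:R.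
Hypothesis hspan : forall y, y = \sum_v ce v y *: e v + \sum_a cx a y *: x a.

Let EeEe' := EeEe hg hxx ceL cee cex cxL cxe cxx hspan.
Let EeXa' := EeXa hg hxx ceL cee cex cxL cxe cxx hspan.
Let XaEe' := XaEe hg hxx ceL cee cex cxL cxe cxx hspan.
Let XaXa' := XaXa hg hxx ceL cee cex cxL cxe cxx hspan.
Let EeDe' := EeDe hg hxx ceL cee cex cxL cxe cxx hspan.
Let EeDx' := EeDx hg hxx ceL cee cex cxL cxe cxx hspan.
Let XaDe' := XaDe hg hxx ceL cee cex cxL cxe cxx hspan.
Let XaDx' := XaDx hg hxx ceL cee cex cxL cxe cxx hspan.
Let DeEe' := DeEe hg hxx ceL cee cex cxL cxe cxx hspan.
Let DxEe' := DxEe hg hxx ceL cee cex cxL cxe cxx hspan.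
Let DeXa' := DeXa hg hxx ceL cee cex cxL cxe cxx hspan.
Let DxXa' := DxXa hg hxx ceL cee cex cxL cxe cxx hspan.
Let DxDx' := DxDx hg hxx ceL cee cex cxL cxe cxx hspan.
Let DeDx' := DeDx hg hxx ceL cee cex cxL cxe cxx hspan.
Let Ee_sum' := Ee_sum hg hxx ceL cee cex cxL cxe cxx hspan.
Let TE_span' := TE_span hg hxx ceL cee cex cxL cxe cxx hspan.
Let edE' := edE hg hxx ceL cee cex cxL cxe cxx hspan.
Let xdE' := xdE hg hxx ceL cee cex cxL cxe cxx hspan.

Definition Xb (a : qarr (brauer_quiver n)) : TE A :=
  match a with
  | inl i => if o i then Xa (Q:=QA) x i else Dx (Q:=QA) cx i
  | inr i => if o i then Dx (Q:=QA) cx i else Xa (Q:=QA) x i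
  end.

Lemma TEq : @quiver_gens K (brauer_quiver n) (TE A) *%R 1 (Ee (Q:=QA) e) Xb.
Proof.
split.
- exact: EeEe'.
- exact: Ee_sum'.
- case=> i /=; case oi: (o i);
    rewrite ?EeXa' ?EeDx' /= ?oi ?eqxx ?XaEe' ?DxEe' /= ?oi ?eqxx //.
Qed.

Lemma TE_ab i : Xb (inl i) * Xb (inr i) = De (Q:=QA) ce (@edge_lo n i).
Proof. by rewrite /=; case oi: (o i); rewrite ?XaDx' ?DxXa' eqxx /= oi. Qed.

Lemma TE_ba i : Xb (inr i) * Xb (inl i) = De (Q:=QA) ce (@edge_hi n i).
Proof. by rewrite /=; case oi: (o i); rewrite ?XaDx' ?DxXa' eqxx /= oi. Qed.

Lemma TE_neq (a b : 'I_n'.+1 + 'I_n'.+1) :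
  (match a with inl i => i | inr i => i end) !=
  (match b with inl i => i | inr i => i end) -> Xb a * Xb b = 0.
Proof.
case: a => i; case: b => j /= nij; case: (o i); case: (o j);
  rewrite ?XaXa' ?XaDx' ?DxXa' ?DxDx' // ?(negbTE nij) // eq_sym (negbTE nij) //.
Qed.


Lemma TErels r : r \in brauer_rels K n -> rel_val *%R 1 Xb r = 0.
Proof.
rewrite mem_cat => /orP [] /flattenP [s sin rin].
  case/allpairsPdep: sin => i [j [_ jin sE]]; subst s.
  move: jin; rewrite mem_filter => /andP [/eqP ji _].
  have nij : i != j by apply/eqP => ij; move: ji; rewrite ij => /n_Sn.
  move: rin; rewrite !inE => /or3P [] /eqP ->;
    rewrite /rel_val !big_cons big_nil /= ?addr0 ?scale1r.
  - exact: (@TE_neq (inl i) (inl j)).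
  - by apply: (@TE_neq (inr j) (inr i)); rewrite eq_sym.
  - rewrite (TE_ba i) (TE_ab j) scaleN1r.
    have -> : @edge_hi n i = @edge_lo n j by apply: val_inj; rewrite /= ji.
    by rewrite subrr.
case/mapP: sin => i _ sE; subst s.
move: rin; rewrite !inE => /orP [] /eqP ->;
  rewrite /rel_val !big_cons big_nil /= ?addr0 ?scale1r.
- rewrite (TE_ab i) /=; case: (o i); by rewrite ?DeXa' ?DeDx'.
- rewrite (TE_ba i) /=; case: (o i); by rewrite ?DeXa' ?DeDx'.
Qed.

Lemma soc_TE v : soc Xb v = De (Q:=QA) ce v.
Proof.
rewrite /soc /pv /qv; case: ifP => [/eqP v0|nz].
  rewrite TE_ab; congr De; exact: val_inj.
rewrite TE_ba; congr De; apply: val_inj => /=.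
have vpos : (0 < v)%N by rewrite lt0n nz.
have hv : (v.-1 < n'.+1)%N by rewrite -ltnS prednK.
by rewrite inordK // prednK.
Qed.

Lemma bwS w : bw (Ee (Q:=QA) e) Xb (inr w) = De (Q:=QA) ce w.
Proof. exact: soc_TE. Qed.

Definition cfT (k : Bt n') (u : TE A) : K :=
  match k with
  | inl (inl v) => ce v u.1
  | inl (inr (inl i)) => if o i then cx i u.1 else u.2 (x i)
  | inl (inr (inr i)) => if o i then u.2 (x i) else cx i u.1
  | inr v => u.2 (e v)
  end.

Lemma cfT_lin k c u w : cfT k (c *: u + w) = c * cfT k u + cfT k w.
Proof.
have h2 : forall y, (c *: u + w).2 y = c * u.2 y + w.2 y.
  by move=> y; rewrite /= add_lfunE scale_lfunE.
by case: k => [[v|[i|i]]|v] /=; rewrite ?ceL ?h2 //; case: (o i); rewrite ?cxL ?h2.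
Qed.

Lemma cfT_span u : u = \sum_k cfT k u *: bw (Ee (Q:=QA) e) Xb k.
Proof.
rewrite big_sumType big_sumType big_sumType /=.
under [X in _ = _ + X]eq_bigr do rewrite soc_TE.
rewrite {1}[u]TE_span' -!addrA; congr (_ + _).
rewrite [X in _ = X]addrA [X in _ = X]addrC addrCA; congr (_ + _).
rewrite -!big_split /=; apply: eq_bigr => i _; case: (o i) => //.
exact: addrC.
Qed.

Lemma eq_inl (T1 T2 : eqType) (a b : T1) : (inl a == inl b :> T1 + T2) = (a == b).
Proof. by apply/eqP/eqP => [[]|->]. Qed.
Lemma eq_inr (T1 T2 : eqType) (a b : T2) : (inr a == inr b :> T1 + T2) = (a == b).
Proof. by apply/eqP/eqP => [[]|->]. Qed.

Lemma cfT_b k l : cfT k (bw (Ee (Q:=QA) e) Xb l) = (l == k)%:R.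
Proof.
have ce0 : forall v, ce v 0 = 0 by move=> v; apply: lin0.
have cx0 : forall a, cx a 0 = 0 by move=> a; apply: lin0.
case: k => [[v|[i|i]]|v]; case: l => [[w|[j|j]]|w];
  rewrite ?bwS /= ?zero_lfunE ?edE' ?xdE' ?ce0 ?cx0 ?cee ?cex //;
  try (case: (eqVneq j i) => [->|nji]); try (case: (o i)); try (case: (o j));
  rewrite /= ?zero_lfunE ?edE' ?xdE' ?ce0 ?cx0 ?cee ?cex ?cxe ?cxx ?eqxx //;
  rewrite ?eq_inl ?eq_inr ?(negbTE nji) ?eqxx //; rewrite eq_sym ?(negbTE nji) //;
  case: eqP => // -[] eij; by rewrite eij eqxx in nji.
Qed.


Lemma TE_presents : @presents K (TExt A) (@texmul K A) (texone A)
  (brauer_quiver n) (brauer_rels K n) (Ee (Q:=QA) e) Xb.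
Proof.
split; [exact: TEq | exact: TErels |].
move=> C e2 x2 hgC hrC.
have tabV := btab TEq TErels.
have tabC := btab hgC hrC.
have oneV := bone TEq.
have oneC := bone hgC.
exists (phiB (bw e2 x2) cfT).
split.
- exact: (phiB_hom cfT_lin cfT_span cfT_b tabV tabC oneV oneC).
- move=> v; exact: (phiB_b (bw e2 x2) cfT_b (inl (inl v))).
- move=> a; exact: (phiB_b (bw e2 x2) cfT_b (inl (inr a))).
- move=> psi hpsi he hx.
  have hM : forall u v : TE A, psi (u * v) = psi u * psi v by case: hpsi.
  apply: (phiB_uniq (bC := bw e2 x2) cfT_span hpsi) => k.
  case: k => [[v|a]|v] /=; [exact: he | exact: hx |].
  by rewrite /soc -hx -hx -hM.
Qed.

End BrauerTE.

Lemma big_unitE (R : nmodType) (F : unit -> R) : \sum_(v : unit) F v = F tt.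
Proof. by rewrite (bigD1 tt) //= big_pred0 ?addr0 // => -[]. Qed.

Lemma sum_boolE (R : nmodType) (F : bool -> R) : \sum_(b : bool) F b = F true + F false.
Proof. by rewrite (bigD1 true) //= (big_pred1 false) // => -[]. Qed.

Lemma sum_boolF (R : nmodType) (F : bool -> R) : \sum_(b : bool | ~~ b) F b = F false.
Proof. by rewrite (big_pred1 false) // => -[]. Qed.

Section LoopTE.
Variables (K : fieldType) (o : 'I_0 -> bool) (A : falgType K).
Notation QA := (@An_quiver 1 o).
Variables (e : 'I_1 -> A) (x : 'I_0 -> A).
Variables (ce : 'I_1 -> A -> K) (cx : 'I_0 -> A -> K).
Hypothesis hg : @quiver_gens K QA A *%R 1 e x.
Hypothesis hxx : forall a b, x a * x b = 0.
Hypothesis ceL : forall v c u w, ce v (c *: u + w) = c * ce v u + ce v w.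
Hypothesis cee : forall v w, ce v (e w) = (w == v)%:R.
Hypothesis cex : forall v a, ce v (x a) = 0.
Hypothesis cxL : forall a c u w, cx a (c *: u + w) = c * cx a u + cx a w.
Hypothesis cxe : forall a w, cx a (e w) = 0.
Hypothesis cxx : forall a b, cx a (x b) = (b == a)%:R.
Hypothesis hspan : forall y, y = \sum_v ce v y *: e v + \sum_a cx a y *: x a.

Let EeEe' := EeEe hg hxx ceL cee cex cxL cxe cxx hspan.
Let EeDe' := EeDe hg hxx ceL cee cex cxL cxe cxx hspan.
Let DeEe' := DeEe hg hxx ceL cee cex cxL cxe cxx hspan.
Let DeDe' := DeDe hg hxx ceL cee cex cxL cxe cxx hspan.
Let Ee_sum' := Ee_sum hg hxx ceL cee cex cxL cxe cxx hspan.
Let TE_span' := TE_span hg hxx ceL cee cex cxL cxe cxx hspan.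
Let edE' := edE hg hxx ceL cee cex cxL cxe cxx hspan.

Definition e1 (v : qvert loop_quiver) : TE A := Ee (Q:=QA) e ord0.
Definition x1 (a : qarr loop_quiver) : TE A := De (Q:=QA) ce ord0.

Lemma Lq : @quiver_gens K loop_quiver (TE A) *%R 1 e1 x1.
Proof.
split.
- by move=> [] []; rewrite /e1 EeEe' eqxx.
- by rewrite big_unitE /e1 -Ee_sum' big_ord1.
- by move=> []; rewrite /e1 /x1 /= EeDe' eqxx DeEe' eqxx.
Qed.

Lemma Lr r : r \in loop_rels K -> rel_val *%R 1 x1 r = 0.
Proof.
rewrite inE => /eqP ->; rewrite /rel_val big_cons big_nil /= addr0 scale1r.
exact: DeDe'.
Qed.

Definition bL (b : bool) : TE A := if b then x1 tt else e1 tt.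
Definition cfL (b : bool) (u : TE A) : K := if b then u.2 (e ord0) else ce ord0 u.1.
Definition prodL (b c : bool) : option bool :=
  match b, c with
  | false, false => Some false
  | false, true => Some true
  | true, false => Some true
  | true, true => None
  end.

Lemma cfL_lin k c u w : cfL k (c *: u + w) = c * cfL k u + cfL k w.
Proof. by case: k; rewrite /= ?ceL // add_lfunE scale_lfunE. Qed.

Lemma cfL_span u : u = \sum_k cfL k u *: bL k.
Proof.
rewrite sum_boolE /= {1}[u]TE_span' !big_ord1 !big_ord0 !addr0.
by rewrite addrC.
Qed.

Lemma cfL_b k l : cfL k (bL l) = (l == k)%:R.
Proof.
have ce0 : ce ord0 0 = 0 by apply: lin0.
by case: k; case: l; rewrite /= ?zero_lfunE ?edE' ?cee ?ce0 ?eqxx.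
Qed.

Lemma tabL k l : bL k * bL l = oapp bL 0 (prodL k l).
Proof.
by case: k; case: l; rewrite /bL /e1 /x1 /= ?EeEe' ?EeDe' ?DeEe' ?DeDe' ?eqxx.
Qed.

Lemma TE_presents1 : @presents K (TExt A) (@texmul K A) (texone A)
  loop_quiver (loop_rels K) e1 x1.
Proof.
split; [exact: Lq | exact: Lr |].
move=> C e2 x2 hgC hrC.
pose bC (b : bool) : C := if b then x2 tt else e2 tt.
have x2x2 : x2 tt * x2 tt = 0.
  have := hrC _ (mem_head _ _).
  by rewrite /rel_val big_cons big_nil /= addr0 scale1r.
have tabC : forall k l, bC k * bC l = oapp bC 0 (prodL k l).
  case; case; rewrite /bC /= ?x2x2 ?(qg_ee hgC) ?(qg_ex hgC) ?(qg_xe hgC) //.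
have oneV : 1 = \sum_(k | ~~ k) bL k.
  by rewrite sum_boolF /= /e1 -Ee_sum' big_ord1.
have oneC : 1 = \sum_(k | ~~ k) bC k.
  by rewrite sum_boolF /= -(qg_sum hgC) big_unitE.
exists (phiB bC cfL).
split.
- exact: (phiB_hom cfL_lin cfL_span cfL_b tabL tabC oneV oneC).
- by move=> []; exact: (phiB_b bC cfL_b false).
- by move=> []; exact: (phiB_b bC cfL_b true).
- move=> psi hpsi he hx.
  apply: (phiB_uniq (bC := bC) cfL_span hpsi) => k.
  by case: k; [exact: hx | exact: he].
Qed.
End LoopTE.

Lemma An_noloop (n : nat) (o : 'I_n.-1 -> bool) (a : qarr (An_quiver o)) :
  qsrc a != qtgt a.
Proof.
rewrite /=; case: (o a); apply/eqP => /(congr1 val) /=.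
  by move/n_Sn.
by move/esym/n_Sn.
Qed.

Unset Implicit Arguments.

Theorem lemma3p8 (K : closedFieldType) (n : nat) (o : 'I_n.-1 -> bool)
    (Z : seq ('I_n.-1 * 'I_n.-1)) (A : falgType K)
    (e : 'I_n -> A) (x : 'I_n.-1 -> A) :
  (0 < n)%N ->
  @presents K A *%R 1 (An_quiver o) (@zero_rels K (An_quiver o) Z) e x ->
  @admissible K (An_quiver o) A x ->
  @gentle K (An_quiver o) A x ->
  rad_sq_zero A ->
  is_brauer_line n (@texmul K A) (texone A).
Proof.
move=> n0 hp [m [hm2 hmz]] _ hrad.
have hnl := @An_noloop n o.
have hxx : forall a b, x a * x b = 0 := xx0 hp hm2 hmz hrad.
have [ce hce] := fin_all_exists (ce_ex hp).
have [cx hcx] := fin_all_exists (cx_ex hp hnl).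
have ceL : forall v c u w, ce v (c *: u + w) = c * ce v u + ce v w.
  by move=> v; case: (hce v).
have cee : forall v w, ce v (e w) = (w == v)%:R by move=> v; case: (hce v).
have cex : forall v a, ce v (x a) = 0 by move=> v; case: (hce v).
have cxL : forall a c u w, cx a (c *: u + w) = c * cx a u + cx a w.
  by move=> a; case: (hcx a).
have cxe : forall a w, cx a (e w) = 0 by move=> a; case: (hcx a).
have cxx : forall a b, cx a (x b) = (b == a)%:R by move=> a; case: (hcx a).
have hspan := A_span hp hm2 hmz hrad ceL cee cex cxL cxe cxx.
have hg := hpg hp.
clear hce hcx hp hmz hnl.
move: n o Z e x n0 hg hxx ce cx ceL cee cex cxL cxe cxx hspan.
case=> [//|[|n']] o Z e x _ hg hxx ce cx ceL cee cex cxL cxe cxx hspan;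
  rewrite /is_brauer_line /=.
  exists (e1 o e), (x1 o ce).
  exact: (TE_presents1 hg hxx ceL cee cex cxL cxe cxx hspan).
exists (Ee (Q:=An_quiver o) e), (Xb o x cx).
exact: (TE_presents hg hxx ceL cee cex cxL cxe cxx hspan).
Qed.
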